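(* Let $p$ be a prime number and let $H$ be a $p\times p$ circulant complex Hadamard matrix all of whose entries are $p$-th roots of unity (i.e. $H\in C^{circ}_p(p)$). Then $H$ is equivalent to the Fourier matrix $F_p=(w^{ij})_{i,j=0}^{p-1}$, $w=e^{2\pi i/p}$.
   Context: A complex Hadamard matrix of order $n$ is a matrix $H\in M_n(\mathbb C)$ with $|H_{ij}|=1$ for all $i,j$ and pairwise orthogonal rows (equivalently $H/\sqrt n$ is unitary). A matrix $H=(H_{ij})_{i,j=0}^{n-1}$ is circulant if $H_{ij}$ depends only on $j-i$ modulo $n$. $C^{circ}_n(l)$ denotes the set of $n\times n$ circulant complex Hadamard matrices whose entries are all $l$-th roots of unity. Two complex Hadamard matrices are equivalent if one can be obtained from the other by permuting rows, permuting columns, and multiplying individual rows and individual columns by complex numbers of modulus one. *)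

(* Defs.v *)
(* complex numbers are modelled by algC (algebraic complex numbers),
   which contains all roots of unity. *)
From HB Require Import structures.
From mathcomp Require Import all_boot all_order all_algebra all_fingroup all_field.
Set Implicit Arguments. Unset Strict Implicit. Unset Printing Implicit Defensive.
Import Order.TTheory GRing.Theory Num.Theory.
Local Open Scope ring_scope.

Definition complex_hadamard (n : nat) (H : 'M[algC]_n) : Prop :=
  (forall i j, `|H i j| = 1) /\
  (forall i k : 'I_n, i != k -> \sum_(j < n) H i j * (H k j)^* = 0).

Definition circulant (n : nat) (H : 'M[algC]_n) : Prop :=
  forall i j k l : 'I_n,
    (j + n - i = l + n - k %[mod n])%N -> H i j = H k l.

Definition entries_roots_of_unity (l n : nat) (H : 'M[algC]_n) : Prop :=
  forall i j, (H i j) ^+ l = 1.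

Definition in_Ccirc (n l : nat) (H : 'M[algC]_n) : Prop :=
  complex_hadamard H /\ circulant H /\ entries_roots_of_unity l H.
Arguments in_Ccirc : clear implicits.

(* Equivalence: K is obtained from H by permuting rows and columns and
   multiplying rows and columns by unimodular scalars. Any composition of
   these operations has this normal form. *)
Definition hadamard_equiv (n : nat) (H K : 'M[algC]_n) : Prop :=
  exists (s t : 'S_n) (a b : 'I_n -> algC),
    (forall i, `|a i| = 1) /\ (forall j, `|b j| = 1) /\
    (forall i j, K i j = a i * b j * H (s i) (t j)).

(* w = e^{2 pi i / n}: n.-root (-1) is the n-th root of -1 of minimal
   nonnegative argument, i.e. e^{i pi / n}; its square is e^{2 pi i / n}. *)
Definition fourier_root (n : nat) : algC := (n.-root (-1)) ^+ 2.

Definition fourier_matrix (n : nat) : 'M[algC]_n :=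
  \matrix_(i < n, j < n) fourier_root n ^+ (i * j).

(* Main.v *)
Require Import Defs.
From HB Require Import structures.
From mathcomp Require Import all_boot all_order all_algebra all_fingroup all_field.
From mathcomp Require Import zify ring lra.
Import Order.TTheory GRing.Theory Num.Theory.
Local Open Scope ring_scope.

Set Implicit Arguments. Unset Strict Implicit. Unset Printing Implicit Defensive.

Section PowerSums.
Variable p : nat.
Hypothesis pP : prime p.
Local Notation F := 'F_p.

Lemma p_gt1 : (1 < p)%N. Proof. exact: prime_gt1. Qed.

Lemma natFp0 : p%:R = 0 :> F. Proof. exact: pchar_Fp_0. Qed.

Lemma sumX0 : \sum_(x : F) x ^+ 0 = 0.
Proof. by rewrite sumr_const card_Fp // -[_ *+ _]mulr_natr mul1r natFp0. Qed.

Lemma Fp_unit_pow (x : F) : x != 0 -> x ^+ p.-1 = 1.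
Proof.
move=> nx; apply: (mulfI nx); rewrite -exprS prednK ?prime_gt0 // mulr1.
by have := expf_card x; rewrite card_Fp.
Qed.

Lemma sumXpm1 : \sum_(x : F) x ^+ p.-1 = -1.
Proof.
have h : (p.-1 == 0)%N = false by case: p pP => [|[|]].
rewrite (bigD1 0) //= expr0n h add0r.
rewrite (eq_bigr (fun _ => 1)); last by move=> x nx; rewrite Fp_unit_pow.
rewrite sumr_const cardC1 card_Fp // -[_ *+ _]mulr_natr mul1r.
apply/eqP; rewrite -subr_eq0 opprK -(natrD _ _ 1) addn1 prednK ?prime_gt0 //.
by rewrite natFp0.
Qed.

Lemma sumX_mid m : (0 < m < p.-1)%N -> \sum_(x : F) x ^+ m = 0.
Proof.
case/andP=> m0 mp.
have [c c0 cm] : exists2 c : F, c != 0 & c ^+ m != 1.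
  case: (boolP [exists c : F, (c != 0) && (c ^+ m != 1)]).
    by case/existsP => c /andP[]; exists c.
  rewrite negb_exists => /forallP H.
  have: (size (enum [pred x : F | x != 0%R]) <= m)%N.
    apply: (@max_unity_roots _ m) => //; last exact: enum_uniq.
    apply/allP => x; rewrite mem_enum inE => nx.
    by have := H x; rewrite nx /= negbK unity_rootE.
  rewrite -cardE cardC1 card_Fp //.
  by rewrite leqNgt mp.
have E : \sum_(x : F) x ^+ m = c ^+ m * \sum_(x : F) x ^+ m.
  rewrite mulr_sumr (reindex_inj (mulfI c0)) /=.
  by apply: eq_bigr => x _; rewrite exprMn.
apply/eqP; move/eqP: E; rewrite -subr_eq0 -{1}[\sum_x _]mul1r -mulrBl mulf_eq0.
by rewrite subr_eq0 eq_sym (negbTE cm).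
Qed.

Lemma sum_poly (Q : {poly F}) : (size Q <= p)%N -> \sum_(x : F) Q.[x] = - Q`_p.-1.
Proof.
move=> sQ.
rewrite (eq_bigr (fun x => \sum_(i < p.-1.+1) Q`_i * x ^+ i)); last first.
  by move=> x _; rewrite (horner_coef_wide _ (n := p.-1.+1)) // prednK ?prime_gt0.
rewrite exchange_big big_ord_recr /= -mulr_sumr sumXpm1 mulrN1.
rewrite big1 ?add0r // => i _.
rewrite -mulr_sumr; case: (posnP i) => [-> | i0].
  by rewrite sumX0 mulr0.
by rewrite sumX_mid ?mulr0 // i0 ltn_ord.
Qed.

End PowerSums.

Section Planar.
Variable p : nat.
Hypothesis pP : prime p.
Local Notation F := 'F_p.

Definition planar (g : F -> F) :=
  forall a : F, a != 0 -> injective (fun x => g (x + a) - g x).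

Lemma planar_sum g i j : planar g -> (0 < j < p.-1)%N ->
  \sum_(x : F) \sum_(y : F) (y - x) ^+ i * (g y - g x) ^+ j = 0.
Proof.
move=> pg hj.
under eq_bigr => x _ do rewrite (reindex_inj (addIr x)) /=.
rewrite exchange_big /=; apply: big1 => a _.
under eq_bigr => x _ do rewrite addrK.
rewrite -mulr_sumr.
have [-> | a0] := eqVneq a 0.
  rewrite big1 ?mulr0 // => x _; rewrite add0r subrr expr0n.
  by case: j hj => [|j] //; rewrite mulr0.
under eq_bigr => x _ do rewrite (addrC a x).
have -> : \sum_(x : F) (g (x + a) - g x) ^+ j = \sum_(b : F) b ^+ j.
  by rewrite [in RHS](reindex_inj (pg a a0)).
by rewrite sumX_mid ?mulr0.
Qed.

Lemma interp (g : F -> F) : exists P : {poly F}, (size P <= p)%N /\ forall x, P.[x] = g x.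
Proof.
exists (\sum_(z : F) g z *: (1 - ('X - z%:P) ^+ p.-1)); split.
  apply: leq_trans (size_sum _ _ _) _; apply/bigmax_leqP => z _.
  apply: leq_trans (size_scale_leq _ _) _.
  apply: leq_trans (size_polyD _ _) _; rewrite size_polyN size_exp_XsubC size_poly1.
  by rewrite prednK ?prime_gt0 // geq_max prime_gt0 // leqnn.
move=> x; rewrite horner_sum (bigD1 x) //= big1 ?addr0.
  rewrite hornerZ !hornerE subrr expr0n.
  have h : (p.-1 == 0)%N = false by case: p pP => [|[|]].
  by rewrite h subr0 mulr1.
move=> z zx; rewrite hornerZ !hornerE Fp_unit_pow ?subrr ?mulr0 //.
by rewrite subr_eq0 eq_sym.
Qed.

Lemma sum_mono (P : {poly F}) (e : F) k l d : size P = d.+1 -> e != 0 ->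
  ((k + d * l).+1 <= p)%N ->
  \sum_(x : F) (e * x) ^+ k * (e * P.[x]) ^+ l =
  if (k + d * l == p.-1)%N then - (e ^+ (k + l) * lead_coef P ^+ l) else 0.
Proof.
move=> sP e0 hs.
have P0 : P != 0 by rewrite -size_poly_eq0 sP.
set Q := e ^+ (k + l) *: (P ^+ l * 'X^k).
have PlN : P ^+ l != 0 by rewrite expf_neq0.
have sQ : size Q = (k + d * l).+1.
  rewrite size_scale ?expf_neq0 // size_mulXn //.
  have -> : size (P ^+ l) = (d * l).+1.
    by rewrite -[d]/(d.+1.-1) -sP -size_exp prednK // lt0n size_poly_eq0.
  by rewrite addnS.
rewrite (eq_bigr (fun x => Q.[x])); last first.
  by move=> x _; rewrite /Q hornerZ hornerM hornerXn horner_exp !exprMn exprD; ring.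
rewrite sum_poly ?sQ //.
case: eqP => h.
  have -> : p.-1 = (size Q).-1 by rewrite sQ h.
  rewrite -/(lead_coef Q) lead_coefZ lead_coefM lead_coefXn mulr1 lead_coef_exp.
  by [].
by rewrite nth_default ?oppr0 // sQ; move: hs h; lia.
Qed.

End Planar.

Section Key.
Variable p : nat.
Hypothesis pP : prime p.
Local Notation F := 'F_p.

Lemma nfact n : (n < p)%N -> ~~ (p %| n`!)%N.
Proof.
elim: n => [|n IH] hn; first by rewrite fact0 dvdn1; case: p pP hn => [|[|]].
rewrite factS Euclid_dvdM // negb_or IH ?andbT; last by apply: ltnW.
by rewrite gtnNdvd.
Qed.

Lemma binF n m : (m <= n)%N -> (n < p)%N -> ('C(n, m))%:R != 0 :> F.
Proof.
move=> mn np; rewrite -(dvdn_pcharf (pchar_Fp pP)); apply: contraNN (nfact np).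
by move=> h; rewrite -(bin_fact mn) dvdn_mulr.
Qed.

Lemma expand_sum (P : {poly F}) i j :
  \sum_(x : F) \sum_(y : F) (y - x) ^+ i * (P.[y] - P.[x]) ^+ j =
  \sum_(k < i.+1) \sum_(l < j.+1) (('C(i, k) * 'C(j, l))%:R *
     (\sum_(x : F) (-1 * x) ^+ (i - k) * (-1 * P.[x]) ^+ (j - l)) *
     (\sum_(y : F) (1 * y) ^+ k * (1 * P.[y]) ^+ l)).
Proof.
under eq_bigr => x _ do under eq_bigr => y _ do
  rewrite [y - x]addrC [P.[y] - P.[x]]addrC !exprDn big_distrlr.
under eq_bigr => x _ do rewrite exchange_big.
rewrite exchange_big; apply: eq_bigr => k _.
under eq_bigr => x _ do rewrite exchange_big.
rewrite exchange_big; apply: eq_bigr => l _.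
rewrite -mulrA big_distrlr mulr_sumr; apply: eq_bigr => x _.
rewrite mulr_sumr; apply: eq_bigr => y _.
rewrite !mulN1r !mul1r natrM -[_ *+ 'C(i, k)]mulr_natl -[_ *+ 'C(j, l)]mulr_natl.
set a := (- x) ^+ (i - k); set b := (- P.[x]) ^+ (j - l).
set c := y ^+ k; set e := P.[y] ^+ l.
set u := 'C(i, k)%:R; set v := 'C(j, l)%:R.
by rewrite [LHS]mulrACA [in LHS](mulrACA a).
Qed.

Lemma no_big (P : {poly F}) : (4 <= size P <= p)%N ->
  planar (fun x => P.[x]) -> False.
Proof.
move=> /andP[s4 sp] pl.
have P0 : P != 0 by rewrite -size_poly_eq0 -lt0n; apply: leq_trans s4.
have [d sPd] : exists d, size P = d.+1 by exists (size P).-1; move: s4; lia.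
have d3 : (3 <= d)%N by move: s4; rewrite sPd; lia.
have dp : (d <= p.-1)%N by move: sp; rewrite sPd; lia.
set q := (p.-1 %/ d)%N; set r := (p.-1 %% d)%N.
have Edq : p.-1 = (q * d + r)%N by apply: divn_eq.
have rd : (r < d)%N by rewrite /r ltn_pmod //; move: d3; lia.
have q1 : (0 < q)%N by rewrite /q divn_gt0 //; move: d3; lia.
have p1 : (1 < p)%N by apply: prime_gt1.
have q3 : (3 * q <= q * d)%N by rewrite mulnC leq_mul2l d3 orbT.
have jj : (0 < 2 * q < p.-1)%N by apply/andP; split; lia.
have := planar_sum pP (2 * r) pl jj.
rewrite expand_sum.
pose A k l := \sum_(x : F) (-1 * x) ^+ k * (-1 * P.[x]) ^+ l.
pose B k l := \sum_(x : F) (1 * x) ^+ k * (1 * P.[x]) ^+ l.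
have AB0 : forall k l : nat, (k <= 2 * r)%N -> (l <= 2 * q)%N -> (k != r) || (l != q) ->
    A (2 * r - k)%N (2 * q - l)%N * B k l = 0.
  move=> k l kr lq kl.
  have [lt|gt|eq] := ltngtP (k + d * l) p.-1.
  - rewrite /B (@sum_mono p pP P _ _ _ d sPd) ?oner_eq0 //; last first.
      by move: lt p1; lia.
    by rewrite (_ : (_ == _) = false) ?mulr0 //; apply/negbTE; move: lt; lia.
  - have hA : (2 * r - k + d * (2 * q - l) < p.-1)%N.
      rewrite mulnBr; rewrite [(q * d)%N]mulnC in Edq.
      have : (d * l <= d * (2 * q))%N by rewrite leq_mul2l lq orbT.
      move: gt Edq kr lq; lia.
    rewrite /A (@sum_mono p pP P _ _ _ d sPd) ?oppr_eq0 ?oner_eq0 //; last by move: hA p1;  lia.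
    by rewrite (_ : (_ == _) = false) ?mul0r //; apply/negbTE; move: hA; lia.
  - exfalso; move: kl.
    have : l = q.
      case: (ltngtP l q) => // h.
        have : (d * l + d <= d * q)%N by rewrite -mulnSr leq_mul2l h orbT.
        rewrite [(q * d)%N]mulnC in Edq.
        move: eq rd kr Edq; lia.
      have : (d * q + d <= d * l)%N by rewrite -mulnSr leq_mul2l h orbT.
      rewrite [(q * d)%N]mulnC in Edq.
      move: eq rd kr Edq; lia.
    move=> lq'; subst l.
    have -> : k = r by rewrite [(q * d)%N]mulnC in Edq; move: eq Edq; lia.
    by rewrite !eqxx.
have hr : (r < (2 * r).+1)%N by lia.
have hq : (q < (2 * q).+1)%N by lia.
rewrite (bigD1 (Ordinal hr)) //= (bigD1 (Ordinal hq)) //=.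
set S1 := \sum_(i < (2 * q).+1 | i != Ordinal hq) _.
set S2 := \sum_(i < (2 * r).+1 | i != Ordinal hr) _.
have Z1 : S1 = 0.
  rewrite /S1; apply: big1 => -[l /= hl] hne.
  have lq : l != q by move: hne; rewrite -val_eqE.
  have := AB0 r l _ _ _; rewrite /A /B /= => h0.
  by rewrite -mulrA h0 ?mulr0 ?lq ?orbT //; lia.
have Z2 : S2 = 0.
  rewrite /S2; apply: big1 => -[k /= hk] hne; apply: big1 => -[l /= hl] _.
  have kr : k != r by move: hne; rewrite -val_eqE.
  have := AB0 k l _ _ _; rewrite /A /B /= => h0.
  by rewrite -mulrA h0 ?mulr0 ?kr //; lia.
rewrite Z1 Z2 !addr0; apply/eqP.
rewrite -mulrA mulf_neq0 //.
  have qd : (d <= q * d)%N by rewrite leq_pmull.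
  by rewrite natrM mulf_neq0 // binF //; lia.
have EA : (2 * r - r + d * (2 * q - q) = p.-1)%N by lia.
have EB : (r + d * q = p.-1)%N by lia.
rewrite (_ : (_ * _) = A (2 * r - r)%N (2 * q - q)%N * B r q) //.
rewrite /A /B !(@sum_mono p pP P _ _ _ d sPd) ?oppr_eq0 ?oner_eq0 //; try lia.
rewrite EA EB !eqxx mulf_neq0 // oppr_eq0 mulf_neq0 ?expf_neq0 ?lead_coef_eq0 //.
by rewrite oppr_eq0 oner_eq0.
Qed.

End Key.

Section Quad.
Variable p : nat.
Hypothesis pP : prime p.
Local Notation F := 'F_p.

Lemma planar_quad (g : F -> F) : planar g ->
  (2 < p)%N /\ exists a b c : F, a != 0 /\ forall x, g x = a * x ^+ 2 + b * x + c.
Proof.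
move=> pg; have [P [sP Pg]] := interp pP g.
have pP' : planar (fun x => P.[x]).
  by move=> a a0 x y /= h; apply: (pg a a0); rewrite -!Pg.
case: (ltnP 3 (size P)) => s3.
  by exfalso; apply: (no_big pP (P := P)) => //; rewrite s3 sP.
case: (ltnP 2 (size P)) => s2.
  have e3 : size P = 3 by apply/eqP; rewrite eqn_leq s2 s3.
  split; first by move: sP; rewrite e3.
  exists P`_2, P`_1, P`_0; split.
    have : P`_(size P).-1 != 0 by rewrite -/(lead_coef P) lead_coef_eq0 -size_poly_eq0 e3.
    by rewrite e3.
  move=> x; rewrite -Pg (horner_coef_wide _ (n := 3)) ?e3 //.
  by rewrite !big_ord_recr big_ord0 /= expr0 expr1; ring.
exfalso.
have E : forall x, P.[x] = P`_0 + P`_1 * x.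
  move=> x; rewrite (horner_coef_wide _ (n := 2)) //.
  by rewrite !big_ord_recr big_ord0 /= expr0 expr1; ring.
have := pP' 1 (oner_neq0 _) 0 1; rewrite /= !E.
have /[swap]/[apply] : P`_0 + P`_1 * (0 + 1) - (P`_0 + P`_1 * 0) =
   P`_0 + P`_1 * (1 + 1) - (P`_0 + P`_1 * 1) by ring.
by move/eqP; rewrite eq_sym oner_eq0.
Qed.

End Quad.

Lemma unit_norm (z : algC) n : (0 < n)%N -> z ^+ n = 1 -> `|z| = 1.
Proof.
move=> n0 zn; apply/eqP; rewrite -(pexpr_eq1 n0) ?normr_ge0 //.
by rewrite -normrX zn normr1.
Qed.

Lemma algC_1neqN1 : (1 : algC) != -1.
Proof.
apply/negP => /eqP h; have : (2%:R : algC) == 0 by rewrite mulr2n {2}h subrr.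
by rewrite pnatr_eq0.
Qed.

Lemma root_neqN1 p : prime p -> odd p -> p.-root (-1 : algC) != -1.
Proof.
move=> pP op; apply/negP => /eqP rE.
have p0 := prime_gt0 pP.
have [z zp] := C_prim_root_exists p0.
have z1 : z != 1.
  apply/negP => /eqP z1.
  have := eq_prim_root_expr zp 1 0; rewrite expr1 expr0 z1 eqxx.
  by rewrite modn_small ?prime_gt1 // mod0n.
have zn : `|z| = 1 := unit_norm p0 (prim_expr_order zp).
have mzp : (- z) ^+ p = -1.
  by rewrite exprNn (prim_expr_order zp) mulr1 -signr_odd op expr1.
have : exists y : algC, [/\ y ^+ p = -1, 0 <= 'Im y & 'Re y = - 'Re z].
  have RN : 'Re (- z) = - 'Re z by rewrite raddfN.
  case: (real_ge0P (Creal_Im (- z))) => h.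
    by exists (- z); split.
  exists (- z)^*; split; last by rewrite Re_conj.
    by rewrite -rmorphXn mzp rmorphN rmorph1.
  by rewrite Im_conj oppr_ge0 ltW.
case=> y [yp yI yR].
have := rootC_Re_max p0 yp yI; rewrite rE yR.
rewrite raddfN /= (Creal_ReP 1 _) ?rpred1 // lerN2 => Rz.
have Rz2 : 1 <= 'Re z ^+ 2 by apply: exprn_ege1.
have := normC2_Re_Im z; rewrite zn expr1n => e.
have I2 : 'Im z ^+ 2 = 0.
  apply/eqP; rewrite eq_le real_exprn_even_ge0 ?Creal_Im // andbT.
  have -> : 'Im z ^+ 2 = 1 - 'Re z ^+ 2 by rewrite e addrC addKr.
  by rewrite subr_le0.
have R2 : 'Re z ^+ 2 = 1 by rewrite e I2 addr0.
have : 'Re z == 1.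
  move: (R2) => /eqP; rewrite sqrf_eq1 => /orP[//|/eqP h].
  by move: Rz; rewrite h => /(le_trans ler01); rewrite oppr_ge0 ler10.
move/eqP => Re1; move/eqP: I2; rewrite expf_eq0 /= => /eqP Im0.
by move: z1; rewrite [z]Crect Re1 Im0 mulr0 addr0 eqxx.
Qed.

Lemma w_prim p : prime p -> p.-primitive_root (fourier_root p).
Proof.
move=> pP; have p0 := prime_gt0 pP.
set r := p.-root (-1 : algC).
have rp : r ^+ p = -1 by apply: rootCK.
have wp : (r ^+ 2) ^+ p = 1 by rewrite exprAC rp sqrrN expr1n.
have w1 : r ^+ 2 != 1.
  rewrite sqrf_eq1 negb_or; apply/andP; split; apply/negP => /eqP h.
    by move: rp; rewrite h expr1n => /eqP; rewrite (negbTE algC_1neqN1).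
  case/orP: (orbN (odd p)) => op.
    by move: h; apply/eqP; apply: root_neqN1.
  move: rp; rewrite h -signr_odd (negbTE op) expr0 => /eqP.
  by rewrite (negbTE algC_1neqN1).
have [m mp mdp] := prim_order_exists p0 wp.
case/primeP: pP => _ /(_ m mdp)/orP[/eqP m1|/eqP mp'].
  by move: mp; rewrite m1 => /prim_expr_order; rewrite expr1 => /eqP; rewrite (negbTE w1).
by rewrite /fourier_root -/r -mp'.
Qed.

Section Conv.
Variable p : nat.
Hypothesis pP : prime p.
Local Notation F := 'F_p.

Definition toF (j : 'I_p) : F := (val j)%:R.
Lemma Fval_lt (u : F) : (val u < p)%N.
Proof. by apply: leq_trans (ltn_ord u) _; rewrite Fp_cast. Qed.
Definition ofF (u : F) : 'I_p := Ordinal (Fval_lt u).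
Lemma valK (u : F) : (nat_of_ord u)%:R = u.
Proof. exact: natr_Zp. Qed.
Lemma toFK : cancel ofF toF.
Proof. by move=> u; rewrite /toF /= valK. Qed.
Lemma ofFK : cancel toF ofF.
Proof. by move=> j; apply: val_inj; rewrite /= /toF val_Fp_nat // modn_small ?ltn_ord. Qed.

Let w := fourier_root p.
Let wP : p.-primitive_root w := w_prim pP.
Definition E (u : F) : algC := w ^+ nat_of_ord u.

Lemma E_nat n : E n%:R = w ^+ n.
Proof. by rewrite /E val_Fp_nat // (prim_expr_mod wP). Qed.
Lemma E_add u v : E (u + v) = E u * E v.
Proof.
have -> : u + v = (nat_of_ord u + nat_of_ord v)%:R by rewrite natrD !valK.
by rewrite E_nat exprD.
Qed.
Lemma E0 : E 0 = 1.
Proof. by rewrite -[0]/(0%:R) E_nat expr0. Qed.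
Lemma E_norm u : `|E u| = 1.
Proof.
apply: (@unit_norm _ p (prime_gt0 pP)).
by rewrite /E exprAC (prim_expr_order wP) expr1n.
Qed.
Lemma E_opp u : E (- u) = (E u)^-1.
Proof.
have nz : E u != 0 by rewrite -normr_eq0 E_norm oner_neq0.
by apply: (mulfI nz); rewrite -E_add subrr E0 divff.
Qed.
Lemma E_conj u : (E u)^* = E (- u).
Proof. by rewrite E_opp invC_norm E_norm expr1n invr1 mul1r. Qed.

Lemma vanish (psi : 'I_p -> F) : \sum_(j : 'I_p) E (psi j) = 0 -> injective psi.
Proof.
move=> S0.
have p0 := prime_gt0 pP.
have [m [Dm mmon] mdiv] := minCpolyP w.
have sm : size m = p.
  have := size_cyclotomic w p.
  by rewrite -(minCpoly_cyclotomic wP) Dm size_map_poly totient_prime // prednK.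
pose U : {poly rat} := \poly_(i < p) 1.
have sU : size U = p by rewrite size_poly_eq // oner_neq0.
have Umon : U \is monic.
  by rewrite monicE /lead_coef sU coef_poly ifT //; move: p0; lia.
have Uw : (map_poly ratr U).[w] = 0 :> algC.
  rewrite (horner_coef_wide (n := p)) ?size_map_poly ?sU //.
  have : w ^+ p - 1 = 0 by rewrite (prim_expr_order wP) subrr.
  rewrite subrX1 => /eqP; rewrite mulf_eq0 subr_eq0 => /orP[w1|/eqP S].
    move: (prim_order_dvd wP 1); rewrite expr1 w1 dvdn1 => /eqP p1.
    by move: (prime_gt1 pP); rewrite p1.
  rewrite -[RHS]S; apply: eq_bigr => i _.
  by rewrite coef_map coef_poly ltn_ord /= rmorph1 mul1r.
have mU : m %| U by rewrite -mdiv /root Uw.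
have eU : m = U by apply/eqP; rewrite -eqp_monic // -dvdp_size_eqp // sm sU.
pose Q : {poly rat} := \sum_(j : 'I_p) 'X^(val (psi j)).
have Qw : root (map_poly ratr Q) w.
  apply/eqP; rewrite rmorph_sum horner_sum -[RHS]S0; apply: eq_bigr => j _.
  by rewrite rmorphXn /= map_polyX hornerXn.
have /dvdpP [r Qr] : U %| Q by rewrite -eU -mdiv.
have sQ : (size Q <= p)%N.
  apply: leq_trans (size_sum _ _ _) _; apply/bigmax_leqP => j _.
  by rewrite size_polyXn Fval_lt.
have U1 : U.[1] = p%:R.
  by rewrite horner_poly (eq_bigr (fun _ => 1)) ?sumr_const ?card_ord // => i _; rewrite expr1n mulr1.
have Q1 : Q.[1] = p%:R.
  by rewrite horner_sum (eq_bigr (fun _ => 1)) ?sumr_const ?card_ord // => i _; rewrite hornerXn expr1n.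
have pn0 : p%:R != 0 :> rat by rewrite pnatr_eq0 -lt0n.
have r0 : r != 0 by apply: contraNneq pn0 => r0; rewrite -Q1 Qr r0 mul0r horner0.
have sr : (size r <= 1)%N.
  have U0 : U != 0 by rewrite -size_poly_eq0 sU -lt0n.
  have aux : forall a b : nat, ((a + b).-1 <= b -> 0 < b -> a <= 1)%N by move=> a b; lia.
  by move: sQ; rewrite Qr size_mul // sU => h; apply: (aux _ p h p0).
have Qc : Q = r`_0 *: U by rewrite Qr [r]size1_polyC // mul_polyC -(size1_polyC sr).
have r01 : r`_0 = 1.
  move: Q1; rewrite Qc hornerZ U1 => /eqP; rewrite -subr_eq0 -{2}(mul1r p%:R) -mulrBl.
  by rewrite mulf_eq0 (negbTE pn0) orbF subr_eq0 => /eqP.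
move=> j1 j2 e; apply/eqP; apply/negP => ne.
have := congr1 (fun P : {poly rat} => P`_(val (psi j1))) Qc.
rewrite /= coefZ coef_poly Fval_lt r01 mulr1 /Q coef_sum (bigD1 j1) //= (bigD1 j2) //=.
rewrite !coefXn -e eqxx /=.
set s := \sum_(i < p | _) _.
have h1 : 0 <= s by apply: sumr_ge0 => i _; rewrite coefXn ler0n.
move=> h2; have : 1 + s == 0 by apply/eqP; apply: (addrI 1); rewrite addr0.
rewrite addr_eq0 => /eqP h3.
have h4 : s = -1 by rewrite -[s]opprK -h3.
by move: h1; rewrite h4 oppr_ge0 ler10.
by apply/negP => /eqP h; apply: ne; rewrite h.
Qed.

End Conv.

Unset Implicit Arguments.
Theorem theorem1p2 (p : nat) (H : 'M[algC]_p) :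
  prime p -> in_Ccirc p p H -> hadamard_equiv H (fourier_matrix p).
Proof.
move=> pP [[Hn Ho] [Hc Hr]].
have p0 := prime_gt0 pP.
pose i0 : 'I_p := ofF pP 0.
pose h u := H i0 (ofF pP u).
have HE : forall i j, H i j = h (toF j - toF i).
  move=> i j.
  have -> : toF j - toF i = (j + p - i)%:R :> 'F_p.
    rewrite natrB; last by apply: leq_trans (ltnW (ltn_ord i)) (leq_addl _ _).
    by rewrite natrD pchar_Fp_0 // addr0.
  apply: Hc.
  have vofF : forall u : 'F_p, nat_of_ord (ofF pP u) = nat_of_ord u by [].
  have vi0 : nat_of_ord i0 = 0%N by rewrite /i0 vofF; have := val_Fp_nat pP 0; rewrite mod0n.
  by rewrite vofF vi0 val_Fp_nat // subn0 modnDr modn_mod.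
have hroot : forall u, h u ^+ p = 1 by move=> u; apply: Hr.
pose g u : 'F_p := (nat_of_ord (sval (prim_rootP (w_prim pP) (hroot u))))%:R.
have hg : forall u, h u = E (g u).
  move=> u; rewrite /g E_nat //; exact: (svalP (prim_rootP (w_prim pP) (hroot u))).
have pg : planar g.
  move=> a a0.
  have psiI : injective (fun j : 'I_p => g (toF j) - g (toF j - a)).
    apply: (vanish pP).
    have k0 : i0 != ofF pP a.
      by apply: contra a0 => /eqP e; rewrite -(toFK pP a) -e toFK.
    rewrite -[RHS](Ho i0 (ofF pP a) k0); apply: eq_bigr => j _.
    by rewrite !HE !hg E_conj // -E_add // /i0 !toFK subr0.
  move=> x y e; apply: (addIr a).
  have := psiI (ofF pP (x + a)) (ofF pP (y + a)); rewrite /= !toFK !addrK => /(_ e).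
  by move/(congr1 (@toF p)); rewrite !toFK.
have [p2 [al [be [ga [al0 gq]]]]] := planar_quad pP pg.
pose tau : 'F_p := - (2%:R * al)^-1.
have two0 : (2%:R : 'F_p) != 0.
  rewrite -(dvdn_pcharf (pchar_Fp pP)); apply/negP => /(dvdn_leq (isT : (0 < 2)%N)).
  by rewrite leqNgt p2.
have tau0 : tau != 0 by rewrite oppr_eq0 invr_eq0 mulf_neq0.
have tinj : injective (fun j => ofF pP (tau * toF j)).
  move=> j1 j2 /(congr1 (@toF p)); rewrite !toFK => /(mulfI tau0) /(congr1 (ofF pP)).
  by rewrite !ofFK.
exists 1%g, (perm tinj), (fun i => E (- (al * toF i ^+ 2 - be * toF i + ga))),
  (fun j => E (- (al * tau ^+ 2 * toF j ^+ 2 + be * tau * toF j))).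
split; first by move=> i; apply: E_norm.
split; first by move=> j; apply: E_norm.
move=> i j; rewrite perm1 permE HE toFK hg gq -!E_add //.
rewrite /fourier_matrix mxE -E_nat // natrM.
have ht : 2%:R * al * tau = -1 by rewrite /tau mulrN mulfV // mulf_neq0.
congr E; rewrite -/(toF i) -/(toF j).
set I := toF i; set J := toF j.
rewrite -[I * J]mul1r -[1]opprK -ht.
ring.
Qed.
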